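(* Let $p$ be a prime, $e,r\ge2$ and $c,d\ge1$ integers with $d\mid e-1$, and let $R$ be a ring of characteristic $p^{r+1}$. Let $\mathbb S=R[x][y;\alpha]$ with $\alpha$ the $R$-ring automorphism of $R[x]$ given by $\alpha(x)=x+px^e$ (so $yx=(x+px^e)y$). Define $\Sigma_m=\frac{e^m-1}{e-1}$ for $m\in\mathbb N$, let $\mu\ge1$ be the integer with $c\Sigma_{\mu-1}\le r<c\Sigma_\mu$, and set $\overline\Sigma_m=c\Sigma_m$ for $0\le m\le\mu$ and $\overline\Sigma_{\mu+s}=c(s+\Sigma_\mu)+sr(e-1)$ for $s\in\mathbb N$. Let $$\widetilde{\mathcal T}=\{x^ny^m: m,n\in\mathbb N,\ n-cm\in d\mathbb Z\},\qquad \mathcal T=\{x^ny^m: m,n\in\mathbb N,\ n-cm\in d\mathbb N,\ n\le\overline\Sigma_m\},$$ and let $A=\bigoplus_{\tau\in\mathcal T}R\tau$ and $\widetilde A=\bigoplus_{\tau\in\widetilde{\mathcal T}}R\tau$. Then $A$ and $\widetilde A$ are subrings of $\mathbb S$; $A$ is a strongly nicely essential subring of $\widetilde A$; and $\widetilde A$ is a special subextension of $\mathbb S$ regarded as the univariate Ore extension $R[x][y;\alpha]$ over $R[x]$ (with, for each $m$, attached data $\lambda_m=x^{cm}y^m$, $B_m=R[x^d]$ and $\alpha_{(m)}$ the restriction of $\alpha^m$ to $R[x^d]$).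
   Context: $\mathbb S$ is free as a left $R$-module on $\{x^ny^m:m,n\in\mathbb N\}$. A subring $A$ of a ring $B$ is nicely essential if for every finite set $E\subseteq B$ of non-zero elements there is $a\in A$ with $0\ne ax\in A$ for all $x\in E$; strongly nicely essential if moreover for every $z\in B$ there is $c\in A$ with $\{a\in A:ac=0\}=0$ and $cz\in A$. For $S=R[x]$ (free over $R$) and the Ore extension $S[y;\alpha]$: for a subring $A'\supseteq R$, $\operatorname{Deg}_y(A')=\{\deg_yf:0\ne f\in A'\}$, $d_{A'}=\gcd(\operatorname{Deg}_y(A')\setminus\{0\})$ if $A'\not\subseteq S$, else $0$; $A'$ is a special subextension if $A'=\sum_m(A'\cap Sy^m)$, $\operatorname{Deg}_y(A')=d_{A'}\mathbb N$, and for each $0\ne m\in\operatorname{Deg}_y(A')$ there exist $\lambda_m=\upsilon_my^m\in A'$ with $\upsilon_m$ regular in $S$, a subring $B_m$ with $R\subseteq B_m\subseteq A'\cap S$ and an automorphism $\alpha_{(m)}$ of $B_m$ such that $\deg_y(\lambda_mq-\alpha_{(m)}(q)\lambda_m)<m$ for all $q\in B_m$, and for every $q\in S$ with $qy^m\in A'$ some $u\in B_m$ regular in $S$ with $uqy^m\in B_m\lambda_m$. *)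

(* Defs.v *)
From HB Require Import structures.
From mathcomp Require Import all_boot all_order all_algebra.
Set Implicit Arguments. Unset Strict Implicit. Unset Printing Implicit Defensive.
Import Order.TTheory GRing.Theory Num.Theory.
Local Open Scope ring_scope.

(* Elements of the Ore extension  S = R[x][y; alpha]  are represented by their
   coefficient sequences in y:  f : {poly {poly R}}, where f`_m : {poly R} is the
   coefficient (in R[x]) of y^m (coefficients written on the LEFT of y^m),
   and (f`_m)`_n : R is the coefficient of x^n y^m.  The additive structure is
   that of {poly {poly R}}; the multiplication is the twisted one below. *)

Section Ore.
Variable R : nzRingType.
Variables (p e : nat).

Definition alphaX (q : {poly R}) : {poly R} := q \Po ('X + p%:R *: 'X^e).

(* Ore multiplication: (a y^i)(b y^j) = a alpha^i(b) y^(i+j) *)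
Definition ore_mul (f g : {poly {poly R}}) : {poly {poly R}} :=
  \sum_(i < size f) \sum_(j < size g)
     ((f`_i * iter i alphaX g`_j)%:P * 'X^(i + j)).

Definition ore_subring (A : {poly {poly R}} -> Prop) : Prop :=
  [/\ A 1,
      (forall f g, A f -> A g -> A (f - g)) &
      (forall f g, A f -> A g -> A (ore_mul f g))].

Definition nicely_essential (A B : {poly {poly R}} -> Prop) : Prop :=
  (forall f, A f -> B f) /\
  forall E : seq {poly {poly R}},
    (forall z, z \in E -> B z /\ z != 0) ->
    exists a, A a /\ forall z, z \in E -> ore_mul a z != 0 /\ A (ore_mul a z).

Definition strongly_nicely_essential (A B : {poly {poly R}} -> Prop) : Prop :=
  nicely_essential A B /\
  forall z, B z ->
    exists c, A c /\ (forall a, A a -> ore_mul a c = 0 -> a = 0)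
              /\ A (ore_mul c z).

Definition Deg_y (A : {poly {poly R}} -> Prop) (k : nat) : Prop :=
  exists f, A f /\ f != 0 /\ (size f).-1 = k.

(* d is the gcd (in the divisibility order of nat) of Deg_y(A) \ {0};
   this is 0 exactly when A is contained in S = R[x] *)
Definition is_dA (A : {poly {poly R}} -> Prop) (d : nat) : Prop :=
  (forall k, Deg_y A k -> k != 0%N -> (d %| k)%N) /\
  (forall g, (forall k, Deg_y A k -> k != 0%N -> (g %| k)%N) -> (g %| d)%N).

Definition regularS (u : {poly R}) : Prop :=
  forall q : {poly R}, (u * q = 0 -> q = 0) /\ (q * u = 0 -> q = 0).

Definition Rsubring (B : {poly R} -> Prop) : Prop :=
  [/\ forall a : R, B a%:P,
      (forall q q', B q -> B q' -> B (q - q')) &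
      (forall q q', B q -> B q' -> B (q * q'))].

Definition ring_aut_on (B : {poly R} -> Prop) (f : {poly R} -> {poly R}) : Prop :=
  (forall q, B q -> B (f q)) /\
  f 1 = 1 /\
  (forall q q', B q -> B q' -> f (q - q') = f q - f q') /\
  (forall q q', B q -> B q' -> f (q * q') = f q * f q') /\
  (forall q q', B q -> B q' -> f q = f q' -> q = q') /\
  (forall q, B q -> exists2 q', B q' & f q' = q).

Definition special_with (A : {poly {poly R}} -> Prop)
    (lam : nat -> {poly {poly R}}) (Bm : nat -> {poly R} -> Prop)
    (alm : nat -> {poly R} -> {poly R}) : Prop :=
  (* A = sum_m (A cap S y^m) *)
  (forall f m, A f -> A ((f`_m)%:P * 'X^m)) /\
  (exists d, is_dA A d /\ (forall k, Deg_y A k <-> (d %| k)%N)) /\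
  (forall m, Deg_y A m -> m != 0%N ->
     (exists u, lam m = u%:P * 'X^m /\ regularS u) /\
     A (lam m) /\
     (Rsubring (Bm m) /\ (forall q, Bm m q -> A q%:P)) /\
     ring_aut_on (Bm m) (alm m) /\
     (* deg_y (lam_m q - alpha_(m)(q) lam_m) < m ; size 0 = 0 handles q=0 *)
     (forall q, Bm m q ->
        (size (ore_mul (lam m) q%:P - ore_mul (alm m q)%:P (lam m))%R <= m)%N) /\
     (forall q : {poly R}, A (q%:P * 'X^m) ->
        exists u, Bm m u /\ regularS u /\
          exists2 b, Bm m b &
            ore_mul u%:P (q%:P * 'X^m) = ore_mul b%:P (lam m))).

Definition special_subextension (A : {poly {poly R}} -> Prop) : Prop :=
  exists lam Bm alm, special_with A lam Bm alm.

End Ore.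

Definition Sigma (e m : nat) : nat := ((e ^ m - 1) %/ (e - 1))%N.

Definition Sbar (e c r mu m : nat) : nat :=
  if (m <= mu)%N then (c * Sigma e m)%N
  else (c * ((m - mu) + Sigma e mu) + (m - mu) * r * (e - 1))%N.

Definition inTt (c d n m : nat) : bool := (n == c * m %[mod d])%N.

Definition inT (e c d r mu n m : nat) : bool :=
  [&& (c * m <= n)%N, (d %| n - c * m)%N & (n <= Sbar e c r mu m)%N].

Definition spanMon (R : nzRingType) (P : nat -> nat -> bool)
    (f : {poly {poly R}}) : Prop :=
  forall m n, (f`_m)`_n != 0 -> P n m.

Definition polyXd (R : nzRingType) (d : nat) (q : {poly R}) : Prop :=
  forall n, q`_n != 0 -> (d %| n)%N.

(* Main.v *)
Require Import Defs.
From HB Require Import structures.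
From mathcomp Require Import all_boot all_order all_algebra.
From mathcomp Require Import zify ring.
Import Order.TTheory GRing.Theory Num.Theory.

Section Arith.
Variable e : nat.
Hypothesis e2 : (2 <= e)%N.

Lemma Sigma0 : Sigma e 0 = 0%N.
Proof. by rewrite /Sigma expn0 subnn div0n. Qed.

Lemma SigmaM m : (Sigma e m * (e - 1) = e ^ m - 1)%N.
Proof.
rewrite /Sigma divnK //.
elim: m => [|m IH]; first by rewrite expn0 subnn dvdn0.
have -> : (e ^ m.+1 - 1 = e ^ m - 1 + e ^ m * (e - 1))%N.
  have h : (1 <= e ^ m)%N by rewrite expn_gt0; lia.
  rewrite expnS; nia.
by rewrite dvdn_add // dvdn_mull.
Qed.

Lemma SigmaS m : Sigma e m.+1 = (1 + e * Sigma e m)%N.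
Proof.
have h1 := SigmaM m.+1; have h2 := SigmaM m.
have h : (1 <= e ^ m)%N by rewrite expn_gt0; lia.
rewrite expnS in h1.
nia.
Qed.

Lemma SigmaD a b : Sigma e (a + b) = (Sigma e a + e ^ a * Sigma e b)%N.
Proof.
elim: a => [|a IH]; first by rewrite Sigma0 expn0 add0n mul1n.
rewrite addSn !SigmaS IH expnS; lia.
Qed.

Lemma Sigma_ge m : (m <= Sigma e m)%N.
Proof. elim: m => [|m IH]; rewrite ?Sigma0 // SigmaS; nia. Qed.

Lemma expE m : (e ^ m = 1 + (e - 1) * Sigma e m)%N.
Proof.
have h1 := SigmaM m. have h : (1 <= e ^ m)%N by rewrite expn_gt0; lia. nia.
Qed.

Lemma Sigma_le_exp m : (Sigma e m <= e ^ m - 1)%N.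
Proof. have h1 := SigmaM m. nia. Qed.

Lemma Sigma_mono a b : (a <= b)%N -> (Sigma e a <= Sigma e b)%N.
Proof.
move=> /subnKC <-; rewrite SigmaD; lia.
Qed.

End Arith.
Arguments SigmaM {e}. Arguments SigmaS {e}. Arguments SigmaD {e}.
Arguments Sigma_ge {e}. Arguments expE {e}. Arguments Sigma_le_exp {e}.
Arguments Sigma_mono {e}.
Require Import Defs.
From HB Require Import structures.
From mathcomp Require Import all_boot all_order all_algebra.
From mathcomp Require Import zify ring.
Import Order.TTheory GRing.Theory Num.Theory.
Local Open Scope ring_scope.
Set Implicit Arguments. Unset Strict Implicit.


Lemma sum_onehot (V : zmodType) N j (x : V) :
  \sum_(i < N) (if (i : nat) == j then x else 0) = if (j < N)%N then x else 0.
Proof.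
case: ltnP => h.
  rewrite (bigD1 (Ordinal h)) //= eqxx big1 ?addr0 // => i ne.
  case: eqP => // ei; case/negP: ne; apply/eqP/val_inj => /=; exact: ei.
rewrite big1 // => i _; case: eqP => // ei.
by move: (ltn_ord i); rewrite ei ltnNge h.
Qed.

Lemma sum_widen (V : zmodType) n N (F : nat -> V) : (n <= N)%N ->
  (forall i, (n <= i)%N -> F i = 0) -> \sum_(i < n) F i = \sum_(i < N) F i.
Proof.
move=> h F0; rewrite -(subnKC h) big_split_ord /= [X in _ + X]big1 ?addr0 //.
by move=> i _; apply: F0; rewrite leq_addr.
Qed.

Lemma sum_nz (V : zmodType) n (F : 'I_n -> V) :
  \sum_(i < n) F i != 0 -> exists i, F i != 0.
Proof.
case: (pickP (fun i => F i != 0)) => [i hi|h]; first by move=> _; exists i.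
by rewrite big1 ?eqxx // => i _; move: (h i) => /negbFE/eqP.
Qed.

Section Ring.
Variable R : nzRingType.
Variables p e r : nat.
Hypothesis e2 : (2 <= e)%N.
Hypothesis hchar : forall n : nat, (n%:R == 0 :> R) = (p ^ r.+1 %| n)%N.

Local Notation al := (@alphaX R p e).
Local Notation xi := ('X + p%:R *: 'X^e : {poly R}).

Lemma alE q : al q = q \Po xi. Proof. by []. Qed.

Lemma al0 : al 0 = 0. Proof. by rewrite alE comp_poly0. Qed.
Lemma alD q q' : al (q + q') = al q + al q'. Proof. by rewrite !alE comp_polyD. Qed.
Lemma alB q q' : al (q - q') = al q - al q'. Proof. by rewrite !alE comp_polyB. Qed.
Lemma alZ c q : al (c *: q) = c *: al q. Proof. by rewrite !alE comp_polyZ. Qed.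
Lemma alC c : al c%:P = c%:P. Proof. by rewrite alE comp_polyC. Qed.
Lemma alXn n : al 'X^n = xi ^+ n. Proof. by rewrite alE comp_Xn_poly. Qed.

Lemma xiE : xi = 'X + p%:R * 'X^e.
Proof. by rewrite -mul_polyC polyC_natr. Qed.

Lemma xi_comm u : GRing.comm xi u.
Proof.
rewrite xiE /GRing.comm mulrDl mulrDr; congr (_ + _); first by rewrite commr_polyX.
by rewrite -mulrA -commr_polyXn mulrA -commr_nat mulrA.
Qed.

Lemma alM q q' : al (q * q') = al q * al q'.
Proof.
rewrite !alE /comp_poly rmorphM /= hornerM_comm //.
rewrite /comm_poly; exact: xi_comm.
Qed.

Lemma al1 : al 1 = 1. Proof. by rewrite -polyC1 alC. Qed.

Lemma iter_al0 m : iter m al 0 = 0.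
Proof. by elim: m => //= m ->; rewrite al0. Qed.
Lemma iter_alB m q q' : iter m al (q - q') = iter m al q - iter m al q'.
Proof. by elim: m => //= m ->; rewrite alB. Qed.
Lemma iter_alD m q q' : iter m al (q + q') = iter m al q + iter m al q'.
Proof. by elim: m => //= m ->; rewrite alD. Qed.
Lemma iter_alZ m c q : iter m al (c *: q) = c *: iter m al q.
Proof. by elim: m => //= m ->; rewrite alZ. Qed.
Lemma iter_alM m q q' : iter m al (q * q') = iter m al q * iter m al q'.
Proof. by elim: m => //= m ->; rewrite alM. Qed.
Lemma iter_al1 m : iter m al 1 = 1.
Proof. by elim: m => //= m ->; rewrite al1. Qed.
Lemma iter_alC m c : iter m al c%:P = c%:P.
Proof. by elim: m => //= m ->; rewrite alC. Qed.

Lemma iter_al_sum m n (F : 'I_n -> {poly R}) :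
  iter m al (\sum_(i < n) F i) = \sum_(i < n) iter m al (F i).
Proof.
elim/big_rec2: _ => [|i y1 y2 _ <-]; first exact: iter_al0.
exact: iter_alD.
Qed.

Lemma poly_expand (q : {poly R}) : q = \sum_(i < size q) q`_i *: 'X^i.
Proof. by rewrite -poly_def coefK. Qed.

Lemma iter_al_coef m q b :
  (iter m al q)`_b = \sum_(i < size q) q`_i * (iter m al 'X^i)`_b.
Proof.
rewrite {1}(poly_expand q) iter_al_sum coef_sum.
by apply: eq_bigr => i _; rewrite iter_alZ coefZ.
Qed.

Definition pdiv k (a : R) := exists s, a = (p ^ k)%:R * s.

Lemma pdiv0 k : pdiv k 0. Proof. by exists 0; rewrite mulr0. Qed.
Lemma pdivD k a b : pdiv k a -> pdiv k b -> pdiv k (a + b).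
Proof. by move=> [s ->] [t ->]; exists (s + t); rewrite mulrDr. Qed.
Lemma pdivN k a : pdiv k a -> pdiv k (- a).
Proof. by move=> [s ->]; exists (- s); rewrite mulrN. Qed.
Lemma pdivMl k a b : pdiv k b -> pdiv k (a * b).
Proof. by move=> [s ->]; exists (a * s); rewrite mulrA commr_nat -mulrA. Qed.
Lemma pdivMr k a b : pdiv k a -> pdiv k (a * b).
Proof. by move=> [s ->]; exists (s * b); rewrite mulrA. Qed.
Lemma pdivMM j k a b : pdiv j a -> pdiv k b -> pdiv (j + k) (a * b).
Proof.
move=> [s ->] [t ->]; exists (s * t).
rewrite expnD natrM -!mulrA; congr (_ * _).
by rewrite mulrA commr_nat -mulrA.
Qed.
Lemma pdiv_any a : pdiv 0 a. Proof. by exists a; rewrite expn0 mul1r. Qed.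
Lemma pdiv_le j k a : (j <= k)%N -> pdiv k a -> pdiv j a.
Proof.
move=> h [s ->]; exists ((p ^ (k - j))%:R * s).
by rewrite mulrA -natrM -expnD subnKC.
Qed.
Lemma pdiv_big k a : (r.+1 <= k)%N -> pdiv k a -> a = 0.
Proof.
move=> h [s ->]; have /eqP -> : (p ^ k)%:R == 0 :> R.
  by rewrite hchar; apply: dvdn_exp2l.
by rewrite mul0r.
Qed.
Lemma pdiv_bound k a : pdiv k a -> a != 0 -> (k <= r)%N.
Proof.
move=> h; apply: contraR; rewrite -ltnNge => hk.
by rewrite (pdiv_big hk h).
Qed.

Definition W n K (h : {poly R}) := forall b, h`_b != 0 ->
  exists k, [/\ b = (n + k * (e - 1))%N, (k <= K)%N & pdiv k h`_b].

Lemma W0 n K : W n K 0. Proof. by move=> b; rewrite coef0 eqxx. Qed.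

Lemma WD n K h h' : W n K h -> W n K h' -> W n K (h + h').
Proof.
move=> Wh Wh' b; rewrite coefD => nz.
case: (eqVneq h`_b 0) => [z|nzh].
  by move: nz; rewrite z add0r => /Wh' [k [eb hk dk]]; exists k.
have [k [eb hk dk]] := Wh _ nzh.
exists k; split => //; case: (eqVneq h'`_b 0) => [->|nzh'].
  by rewrite addr0.
have [k' [eb' _ dk']] := Wh' _ nzh'.
have ek : k' = k.
  have : (k' * (e - 1) = k * (e - 1))%N by lia.
  by move/eqP; rewrite eqn_mul2r; case/orP => /eqP; [lia|].
by rewrite ek in dk'; apply: pdivD.
Qed.

Lemma Wsum n K m (F : 'I_m -> {poly R}) : (forall i, W n K (F i)) ->
  W n K (\sum_(i < m) F i).
Proof.
move=> hF; elim/big_rec: _ => [|i y _ Wy]; first exact: W0.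
by apply: WD.
Qed.

Lemma Wmono n K K' h : (K <= K')%N -> W n K h -> W n K' h.
Proof.
move=> hK Wh b /Wh [k [eb hk dk]]; exists k; split => //; exact: leq_trans hK.
Qed.

Lemma WZ n b j K c g : pdiv j c -> W b K g -> b = (n + j * (e - 1))%N ->
  W n (j + K) (c *: g).
Proof.
move=> dc Wg eb b'; rewrite coefZ => nz.
have nzg : g`_b' != 0 by apply: contraNneq nz => ->; rewrite mulr0.
have [k [eb' hk dk]] := Wg _ nzg.
exists (j + k)%N; split; [lia|lia|]. exact: pdivMM.
Qed.

Lemma WXn n : W n 0 'X^n.
Proof.
move=> b; rewrite coefXn; case: (eqVneq b n) => [->|ne]; last by rewrite /= mulr0n eqxx.
by move=> _; exists 0%N; split; rewrite ?mul0n ?addn0 //; exact: pdiv_any.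
Qed.

Lemma Wxi b K g : W b K g -> W b.+1 K.+1 (g * xi).
Proof.
move=> Wg; rewrite xiE mulrDr; apply: WD.
  move=> b'; rewrite coefMX; case: (eqVneq b' 0%N) => [_|hb] /=; first by rewrite eqxx.
  move=> nz.
  have [k [eb hk dk]] := Wg _ nz; exists k; split => //; [lia|exact: ltnW].
move=> b'; rewrite -polyC_natr mulrA coefMXn; case: ltnP => hb; first by rewrite eqxx.
rewrite coefMC => nz.
have nzg : g`_(b' - e) != 0 by apply: contraNneq nz => ->; rewrite mul0r.
have [k [eb hk dk]] := Wg _ nzg.
exists k.+1; split; [lia|by []|].
rewrite -addn1; apply: pdivMM => //; exists 1; rewrite expn1 mulr1.
done.
Qed.

Lemma Wxin n : W n n (xi ^+ n).
Proof.
elim: n => [|n IH]; first by have := @WXn 0%N; rewrite expr0.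
by rewrite exprSr; apply: Wxi.
Qed.

Lemma W_al n K h : W n K h -> W n (n + K * e) (al h).
Proof.
move=> Wh; rewrite alE comp_polyE; apply: Wsum => i.
case: (eqVneq h`_i 0) => [->|nz]; first by rewrite scale0r; exact: W0.
have [k [ei hk dk]] := Wh _ nz.
move=> b' nz'; have [k' [h1 h2 h3]] := WZ dk (@Wxin i) ei nz'.
exists k'; split => //; rewrite ei in h2; nia.
Qed.

End Ring.

Section Ring2.
Variable R : nzRingType.
Variables p e r : nat.
Hypothesis e2 : (2 <= e)%N.
Hypothesis hchar : forall n : nat, (n%:R == 0 :> R) = (p ^ r.+1 %| n)%N.
Local Open Scope ring_scope.
Local Notation al := (@alphaX R p e).
Local Notation xi := ('X + p%:R *: 'X^e : {poly R}).
Local Notation W := (@W R p e).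
Set Implicit Arguments. Unset Strict Implicit.

Lemma W_iter m n : W n (Sigma e m * n) (iter m al 'X^n).
Proof.
elim: m => [|m IH]; first by rewrite Sigma0 mul0n; exact: WXn.
move=> b /=  nz; have [k [h1 h2 h3]] := W_al e2 IH nz.
exists k; split => //; rewrite SigmaS //; nia.
Qed.

Lemma supp_al m (q : {poly R}) b : (iter m al q)`_b != 0 ->
  exists n k, [/\ q`_n != 0, b = (n + k * (e - 1))%N, (k <= r)%N
                & (k <= Sigma e m * n)%N].
Proof.
rewrite iter_al_coef => /sum_nz [i nz].
have nq : q`_i != 0 by apply: contraNneq nz => ->; rewrite mul0r.
have nh : (iter m al 'X^i)`_b != 0 by apply: contraNneq nz => ->; rewrite mulr0.
have [k [h1 h2 h3]] := W_iter nh.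
exists i, k; split => //.
apply: (pdiv_bound hchar h3 nh).
Qed.

Lemma xi_low i t : (t < i)%N -> (xi ^+ i)`_t = 0.
Proof.
move=> h; apply/eqP; apply: contraT => nz.
have [k [h1 _ _]] := Wxin e2 nz; exfalso; nia.
Qed.

Lemma xi_diag i : (xi ^+ i)`_i = 1.
Proof.
elim: i => [|i IH]; first by rewrite expr0 coef1.
have -> : xi ^+ i.+1 = xi ^+ i * 'X + xi ^+ i * (p%:R * 'X^e).
  by rewrite -mulrDr -xiE exprSr.
rewrite coefD coefMX /= IH.
rewrite -polyC_natr mulrA coefMXn; case: ltnP => h; first by rewrite addr0.
by rewrite coefMC xi_low ?mul0r ?addr0 //; lia.
Qed.

Lemma low_al1 (q : {poly R}) j : (forall i, (i < j)%N -> q`_i = 0) ->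
  (forall i, (i < j)%N -> (al q)`_i = 0) /\ (al q)`_j = q`_j.
Proof.
move=> hq.
have key t : (t <= j)%N ->
    (al q)`_t = \sum_(i < size q) (if (i : nat) == t then q`_t else 0).
  move=> ht; rewrite alE comp_polyE coef_sum; apply: eq_bigr => i _.
  rewrite coefZ; case: (ltngtP i t) => h.
  - by rewrite hq ?mul0r //; exact: leq_trans h ht.
  - by rewrite xi_low // mulr0.
  - by rewrite h xi_diag mulr1.
split.
  move=> i hi; rewrite key ?sum_onehot; last exact: ltnW.
  by case: ifP => //; rewrite hq.
rewrite key // sum_onehot; case: ltnP => // h.
by rewrite nth_default.
Qed.

Lemma low_al m (q : {poly R}) j : (forall i, (i < j)%N -> q`_i = 0) ->
  (forall i, (i < j)%N -> (iter m al q)`_i = 0) /\ (iter m al q)`_j = q`_j.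
Proof.
move=> hq; elim: m => [|m [IH1 IH2]] //=.
have [h1 h2] := low_al1 IH1.
by split => //; rewrite h2 IH2.
Qed.

Lemma exists_low (h : {poly R}) : h != 0 ->
  exists j, h`_j != 0 /\ forall i, (i < j)%N -> h`_i = 0.
Proof.
move=> nz.
have ex : exists j, h`_j != 0.
  by exists (size h).-1; rewrite -lead_coefE lead_coef_eq0.
case: (ex_minnP ex) => j hj hmin; exists j; split => // i hi.
apply/eqP; apply: contraT => nzi; have := hmin _ nzi; lia.
Qed.

Lemma iter_al_nz m (h : {poly R}) : h != 0 -> iter m al h != 0.
Proof.
move=> /exists_low [j [nz low]].
have [_ h2] := low_al m low.
by apply: contraNneq nz => z; rewrite -h2 z coef0.
Qed.

Lemma iter_al_inj m (q q' : {poly R}) : iter m al q = iter m al q' -> q = q'.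
Proof.
move=> E; apply/eqP; rewrite -subr_eq0; apply: contraT => nz.
by have := iter_al_nz m nz; rewrite iter_alB E subrr eqxx.
Qed.

Lemma low_mul (a h : {poly R}) N : (forall i, (i < N)%N -> h`_i = 0) ->
  h`_N = 1 -> a * h = 0 -> a = 0.
Proof.
move=> hl hN E; apply/eqP; apply: contraT => /exists_low [j [nz low]].
have : (a * h)`_(j + N) = a`_j.
  rewrite coefM (eq_bigr (fun i : 'I_(j + N).+1 =>
      if (i : nat) == j then a`_j else 0)).
    by rewrite sum_onehot ltnS leq_addr.
  move=> i _; case: (ltngtP i j) => hij.
  - by rewrite low // mul0r.
  - by rewrite hl ?mulr0 //; have := ltn_ord i; lia.
  - by rewrite hij addKn hN mulr1.
by rewrite E coef0 => /esym/eqP; rewrite (negbTE nz).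
Qed.

Definition pdivP j (q : {poly R}) := forall b, pdiv p j q`_b.

Lemma xi_sub i b : pdiv p 1 (('X^i - xi ^+ i : {poly R})`_b).
Proof.
rewrite coefB coefXn.
case: (eqVneq b i) => [eb|ne] /=.
  by rewrite eb xi_diag mulr1n subrr; exact: pdiv0.
rewrite mulr0n sub0r; apply: pdivN.
case: (eqVneq (xi ^+ i)`_b 0) => [->|nz]; first exact: pdiv0.
have [k [eb hk dk]] := Wxin e2 nz.
case: (posnP k) => [k0|kp]; first by move: ne; rewrite eb k0 mul0n addn0 eqxx.
exact: (pdiv_le kp dk).
Qed.

Lemma pdivP_step j (q : {poly R}) : pdivP j q -> pdivP j.+1 (q - al q).
Proof.
move=> hq b.
have -> : q - al q = \sum_(i < size q) q`_i *: ('X^i - xi ^+ i).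
  rewrite alE comp_polyE {1}(poly_expand q) -sumrB.
  by apply: eq_bigr => i _; rewrite scalerBr.
rewrite coef_sum; elim/big_rec: _ => [|i y _ hy]; first exact: pdiv0.
apply: pdivD => //; rewrite coefZ -addn1; apply: pdivMM => //.
exact: xi_sub.
Qed.

Definition polyXdR d (q : {poly R}) := forall n, q`_n != 0 -> (d %| n)%N.

Lemma polyXd_al m d (q : {poly R}) : (d %| e - 1)%N -> polyXdR d q -> polyXdR d (iter m al q).
Proof.
move=> hd hq b /supp_al [n [k [nz -> _ _]]].
by apply: dvdn_add; [exact: hq | exact: dvdn_mull].
Qed.

Lemma polyXdB d (q q' : {poly R}) : polyXdR d q -> polyXdR d q' -> polyXdR d (q - q').
Proof.
move=> h h' n; rewrite coefB => nz.
case: (eqVneq q`_n 0) => [z|nz1]; last exact: h.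
by apply: h'; move: nz; rewrite z sub0r oppr_eq0.
Qed.

Lemma polyXdD d (q q' : {poly R}) : polyXdR d q -> polyXdR d q' -> polyXdR d (q + q').
Proof.
move=> h h' n; rewrite coefD => nz.
case: (eqVneq q`_n 0) => [z|nz1]; last exact: h.
by apply: h'; move: nz; rewrite z add0r.
Qed.

Lemma al_surj_aux d t j (q : {poly R}) : (d %| e - 1)%N -> (r.+1 <= j + t)%N ->
  polyXdR d q -> pdivP j q -> exists2 q', polyXdR d q' & al q' = q.
Proof.
move=> hd; elim: t j q => [|t IH] j q hj hq dq.
  have -> : q = 0.
    apply/polyP => b; rewrite coef0; apply: (pdiv_big hchar (k:=j)) => //.
    by rewrite addn0 in hj.
  by exists 0; [move=> n; rewrite coef0 eqxx | exact: al0].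
have [q'' h1 h2] := IH j.+1 (q - al q) ltac:(lia)
  (polyXdB hq (@polyXd_al 1%N d q hd hq)) (pdivP_step dq).
exists (q + q''); first exact: polyXdD.
by rewrite alD h2 addrC subrK.
Qed.

Lemma iter_al_surj d m (q : {poly R}) : (d %| e - 1)%N -> polyXdR d q ->
  exists2 q', polyXdR d q' & iter m al q' = q.
Proof.
move=> hd; elim: m q => [|m IH] q hq; first by exists q.
have [q1 h1 <-] := @al_surj_aux d r.+1 0 q hd (leqnn _) hq (fun b => pdiv_any _ _).
have [q2 h2 <-] := IH q1 h1.
by exists q2.
Qed.

End Ring2.

Section Ring3.
Variable R : nzRingType.
Variables p e r : nat.
Hypothesis e2 : (2 <= e)%N.
Hypothesis hchar : forall n : nat, (n%:R == 0 :> R) = (p ^ r.+1 %| n)%N.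
Local Open Scope ring_scope.
Local Notation al := (@alphaX R p e).
Local Notation om := (@ore_mul R p e).

Definition omT (f g : {poly {poly R}}) m i j :=
  if (i + j == m)%N then f`_i * iter i al g`_j else 0.

Lemma om_coef (f g : {poly {poly R}}) m :
  (om f g)`_m = \sum_(i < size f) \sum_(j < size g) omT f g m i j.
Proof.
rewrite /ore_mul coef_sum; apply: eq_bigr => i _; rewrite coef_sum.
apply: eq_bigr => j _; rewrite coefCM coefXn mulr_natr mulrb eq_sym.
by [].
Qed.

Lemma om_coefW (f g : {poly {poly R}}) m N M : (size f <= N)%N -> (size g <= M)%N ->
  (om f g)`_m = \sum_(i < N) \sum_(j < M) omT f g m i j.
Proof.
move=> hN hM; rewrite om_coef.
rewrite (sum_widen (F := fun i => \sum_(j < size g) omT f g m i j) hN); last first.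
  move=> i hi; apply: big1 => j _; rewrite /omT (nth_default _ hi).
  by rewrite mul0r if_same.
apply: eq_bigr => i _.
apply: (sum_widen (F := fun j => omT f g m i j) hM).
move=> j hj; rewrite /omT (nth_default _ hj) iter_al0 mulr0.
by rewrite if_same.
Qed.

Lemma size_mono (a : {poly R}) i : (size (a%:P * 'X^i)%R <= i.+1)%N.
Proof.
rewrite mul_polyC; apply: (leq_trans (size_scale_leq _ _)).
by rewrite size_polyXn.
Qed.

Lemma om_left (a : {poly R}) i0 (g : {poly {poly R}}) m :
  (om (a%:P * 'X^i0) g)`_m = if (i0 <= m)%N then a * iter i0 al g`_(m - i0) else 0.
Proof.
rewrite (om_coefW _ (size_mono a i0) (leqnn (size g))).
rewrite (eq_bigr (fun i : 'I_i0.+1 => if (i : nat) == i0 then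
     \sum_(j < size g) (if (i0 + j == m)%N then a * iter i0 al g`_j else 0)
     else 0)); last first.
  move=> i _; rewrite /omT coefCM coefXn; case: (eqVneq (i : nat) i0) => [->|ne] /=.
    by apply: eq_bigr => j _; rewrite mulr1.
  by apply: big1 => j _; rewrite mulr0 mul0r if_same.
rewrite sum_onehot ltnSn.
case: leqP => h.
  rewrite (eq_bigr (fun j : 'I_(size g) => if (j : nat) == (m - i0)%N then
      a * iter i0 al g`_(m - i0) else 0)); last first.
    move=> j _; case: (eqVneq (j : nat) (m - i0)%N) => [->|ne].
      by rewrite subnKC // eqxx.
    by have -> : (i0 + j == m)%N = false by apply/eqP; lia.
  rewrite sum_onehot; case: ltnP => // hs.
  by rewrite nth_default // iter_al0 mulr0.
apply: big1 => j _; have -> : (i0 + j == m)%N = false by apply/eqP; lia.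
by [].
Qed.

Lemma om_right (f : {poly {poly R}}) (b : {poly R}) j0 m :
  (om f (b%:P * 'X^j0))`_m = if (j0 <= m)%N then f`_(m - j0) * iter (m - j0) al b else 0.
Proof.
rewrite (om_coefW _ (leqnn (size f)) (size_mono b j0)).
rewrite (eq_bigr (fun i : 'I_(size f) => if (i : nat) == (m - j0)%N then
     (if (j0 <= m)%N then f`_(m - j0) * iter (m - j0) al b else 0) else 0)); last first.
  move=> i _.
  rewrite (eq_bigr (fun j : 'I_j0.+1 => if (j : nat) == j0 then
     (if (i + j0 == m)%N then f`_i * iter i al b else 0) else 0)); last first.
    move=> j _; rewrite /omT coefCM coefXn; case: (eqVneq (j : nat) j0) => [->|ne] /=.
      by rewrite mulr1.
    by rewrite mulr0 iter_al0 mulr0 if_same.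
  rewrite sum_onehot ltnSn.
  case: (eqVneq (i : nat) (m - j0)%N) => [->|ne].
    case: leqP => h; first by rewrite subnK // eqxx.
    by have -> : (m - j0 + j0 == m)%N = false by apply/eqP; lia.
  by have -> : (i + j0 == m)%N = false by apply/eqP; lia.
rewrite sum_onehot; case: ltnP => // hs.
by case: leqP => // _; rewrite nth_default // mul0r.
Qed.

Lemma om_supp (f g : {poly {poly R}}) m N : ((om f g)`_m)`_N != 0 ->
  exists i j a n k, [/\ m = (i + j)%N, (f`_i)`_a != 0, (g`_j)`_n != 0,
    N = (a + n + k * (e - 1))%N & (k <= r)%N /\ (k <= Sigma e i * n)%N].
Proof.
rewrite om_coef coef_sum => /sum_nz [i]; rewrite coef_sum => /sum_nz [j].
rewrite /omT; case: ifP => [/eqP hm|_]; last by rewrite coef0 eqxx.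
rewrite coefM => /sum_nz [a nz].
have nf : (f`_i)`_a != 0 by apply: contraNneq nz => ->; rewrite mul0r.
have nh : (iter i al g`_j)`_(N - a) != 0 by apply: contraNneq nz => ->; rewrite mulr0.
have [n [k [h1 h2 h3 h4]]] := supp_al e2 hchar nh.
exists i, j, a, n, k; split => //.
by have := ltn_ord a; lia.
Qed.

End Ring3.
Unset Implicit Arguments.

Section Arith2.
Variables e c r mu : nat.
Hypotheses (e2 : (2 <= e)%N) (c1 : (1 <= c)%N) (mu1 : (1 <= mu)%N)
  (hr : (c * Sigma e mu.-1 <= r)%N).
Local Notation Sb := (Sbar e c r mu).
Local Notation D := (c + r * (e - 1))%N.

Lemma SbL m : (m <= mu)%N -> Sb m = (c * Sigma e m)%N.
Proof. by rewrite /Sbar => ->. Qed.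

Lemma SbG m : (mu <= m)%N -> Sb m = (c * Sigma e mu + (m - mu) * D)%N.
Proof.
move=> h; rewrite /Sbar; case: (leqP m mu) => h'.
  have em : m = mu by lia.
  by rewrite em subnn mul0n addn0.
nia.
Qed.

Lemma L3 : (c * Sigma e mu <= mu * c + (mu - 1) * r * (e - 1))%N.
Proof.
have hm : mu = mu.-1.+1 by lia.
have hS := SigmaS e2 mu.-1. rewrite -hm in hS.
have hr0 := hr.
set s := Sigma e mu.-1 in hS hr0.
have hsg := Sigma_ge e2 mu.-1. rewrite -/s in hsg.
rewrite hS.
case: (ltngtP mu 2) => h.
- have em : mu = 1%N by lia.
  have s0 : s = 0%N.
    rewrite /s em. exact: Sigma0.
  rewrite s0 em; lia.
- have h3 : (r <= (mu - 2) * r * (e - 1))%N.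
    have : (1 <= (mu - 2) * (e - 1))%N by nia. nia.
  have f1 : (c * (1 + e * s) = c + c * s + (e - 1) * (c * s))%N.
    have -> : e = ((e - 1) + 1)%N by lia. rewrite addnK. ring.
  have f2 : ((e - 1) * (c * s) <= (e - 1) * r)%N by apply: leq_mul.
  have f3 : ((mu - 1) * r * (e - 1) = (e - 1) * r + (mu - 2) * r * (e - 1))%N.
    have -> : (mu - 1 = 1 + (mu - 2))%N by lia. ring.
  rewrite f1 f3.
  have f4 : (c <= mu * c)%N by apply: leq_pmull; lia.
  lia.
- have s1 : s = 1%N.
    rewrite /s h /=. rewrite (SigmaS e2 0) Sigma0 muln0 //.
  rewrite s1 h. nia.
Qed.

Lemma cexp_le i : (i < mu)%N -> (c * e ^ i <= D)%N.
Proof.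
move=> hi.
have h1 : (e ^ i <= e ^ mu.-1)%N by apply: leq_pexp2l; lia.
have h2 := expE e2 mu.-1.
nia.
Qed.

Lemma L4 m : (1 <= m)%N -> (Sb m <= c + (m - 1) * D)%N.
Proof.
move=> hm; case: (leqP mu m) => h.
  rewrite SbG //; have := L3; nia.
rewrite SbL; last lia.
elim: m hm h => [//|m IH] _ h.
case: (posnP m) => [->|mp].
  by rewrite SigmaS // Sigma0; lia.
have := IH mp (ltnW h).
have hS : Sigma e m.+1 = (Sigma e m + e ^ m)%N.
  by rewrite -addn1 SigmaD // SigmaS // Sigma0; lia.
have := cexp_le m (ltnW h). rewrite hS. nia.
Qed.

Lemma Sb_succ m : (Sb m <= Sb m.+1)%N.
Proof.
case: (leqP mu m) => h.
  rewrite (SbG m h) (SbG m.+1); last lia.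
  rewrite leq_add2l leq_mul2r; apply/orP; right; lia.
rewrite !SbL //; [|lia]. apply: leq_mul => //. apply: Sigma_mono; lia.
Qed.

Lemma Sb_mono a b : (a <= b)%N -> (Sb a <= Sb b)%N.
Proof.
move=> /subnKC <-; elim: (b - a)%N => [|k IH]; first by rewrite addn0.
by rewrite addnS (leq_trans IH) // Sb_succ.
Qed.

Lemma Sb_low m : (c * m <= Sb m)%N.
Proof.
case: (leqP mu m) => h.
  rewrite SbG //; have := Sigma_ge e2 mu; nia.
rewrite SbL; [|lia]. have := Sigma_ge e2 m; nia.
Qed.

Lemma Sb_big M : (mu <= M)%N -> (c * M + (M - mu) * r * (e - 1) <= Sb M)%N.
Proof. move=> h; rewrite SbG //; have := Sigma_ge e2 mu; nia. Qed.

Lemma Sb0 : Sb 0 = 0%N.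
Proof. by rewrite SbL // Sigma0 muln0. Qed.

Lemma caseB m1 m2 : (1 <= m1)%N -> (1 <= m2)%N -> (mu < m1 + m2)%N ->
  (Sb m1 + Sb m2 + r * (e - 1) <= Sb (m1 + m2))%N.
Proof.
wlog h12 : m1 m2 / (m1 <= m2)%N.
  move=> H h1 h2 h; case: (leqP m1 m2) => hh; first exact: H.
  rewrite (addnC m1 m2) (addnC (Sb m1) (Sb m2)); apply: H => //; [lia|lia].
move=> h1 h2 h; rewrite (SbG (m1+m2)%N); last lia.
case: (leqP mu m2) => hm2.
  rewrite (SbG m2 hm2); have := L4 m1 h1; nia.
rewrite !SbL; [|lia|lia].
set j := (m1 + m2 - mu)%N; set a := (mu - m2)%N.
have hm1 : m1 = (a + j)%N by lia.
have hmu : mu = (m2 + a)%N by lia.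
have ha : (1 <= Sigma e a)%N by have := Sigma_ge e2 a; lia.
have E1 := SigmaD e2 a j. rewrite -hm1 in E1.
have E2 := SigmaD e2 m2 a. rewrite -hmu in E2.
have h3 : (Sigma e m1 <= Sigma e m2)%N by apply: Sigma_mono.
have h4 := Sigma_le_exp e2 m2.
have h5 : (Sigma e m1 + Sigma e m2 <= Sigma e mu)%N.
  rewrite E1 E2.
  have : (e ^ a * Sigma e j <= e ^ m2 - 1)%N by lia.
  have : (1 <= e ^ m2)%N by rewrite expn_gt0; lia.
  nia.
have hj : (1 <= j)%N by lia.
nia.
Qed.

Lemma key n1 m1 n2 m2 k : (n1 <= Sb m1)%N -> (n2 <= Sb m2)%N -> (k <= r)%N ->
  (k <= Sigma e m1 * n2)%N -> (n1 + n2 + k * (e - 1) <= Sb (m1 + m2))%N.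
Proof.
move=> h1 h2 hk hk2.
case: (posnP m2) => [z|m2p].
  subst; move: h2; rewrite Sb0 leqn0 => /eqP z; subst.
  by rewrite muln0 leqn0 in hk2; move/eqP: hk2 => ->; rewrite addn0 !addn0.
case: (posnP m1) => [z|m1p].
  subst; move: h1; rewrite Sb0 leqn0 => /eqP z; subst.
  by rewrite Sigma0 mul0n leqn0 in hk2; move/eqP: hk2 => ->; rewrite !add0n mul0n addn0.
case: (leqP (m1 + m2) mu) => h.
  rewrite !SbL in h1 h2 *; [|lia|lia|lia].
  rewrite SigmaD // expE //.
  have : (k * (e - 1) <= Sigma e m1 * n2 * (e - 1))%N by apply: leq_mul.
  have : (Sigma e m1 * n2 * (e - 1) <= Sigma e m1 * (c * Sigma e m2) * (e - 1))%N.
    by apply: leq_mul => //; apply: leq_mul.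
  nia.
have := caseB m1 m2 m1p m2p h.
have : (k * (e - 1) <= r * (e - 1))%N by apply: leq_mul.
lia.
Qed.

End Arith2.
Set Implicit Arguments.

Lemma congD d a b a' b' : a = a' %[mod d] -> b = b' %[mod d] -> (a + b = a' + b' %[mod d])%N.
Proof. by move=> ha hb; rewrite -modnDm ha hb modnDm. Qed.

Lemma dvd_mod0 d a : (d %| a)%N -> a = 0 %[mod d].
Proof. by move=> /eqP ->; rewrite mod0n. Qed.

Section Main.
Variable R : nzRingType.
Variables p e r c d mu : nat.
Hypotheses (e2 : (2 <= e)%N) (r2 : (2 <= r)%N) (c1 : (1 <= c)%N) (d1 : (1 <= d)%N)
  (hd : (d %| e - 1)%N)
  (hchar : forall n : nat, (n%:R == 0 :> R) = (p ^ r.+1 %| n)%N)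
  (mu1 : (1 <= mu)%N) (hmu : (c * Sigma e mu.-1 <= r)%N).
Local Open Scope ring_scope.
Local Notation al := (@alphaX R p e).
Local Notation om := (@ore_mul R p e).
Local Notation Sb := (Sbar e c r mu).
Local Notation A := (spanMon (R := R) (fun n m => inT e c d r mu n m)).
Local Notation At := (spanMon (R := R) (fun n m => inTt c d n m)).

Lemma inT_mul n1 m1 n2 m2 k : inT e c d r mu n1 m1 -> inT e c d r mu n2 m2 ->
  (k <= r)%N -> (k <= Sigma e m1 * n2)%N ->
  inT e c d r mu (n1 + n2 + k * (e - 1)) (m1 + m2).
Proof.
move=> /and3P [a1 b1 c1'] /and3P [a2 b2 c2] hk hk2.
apply/and3P; split.
- rewrite mulnDr; nia.
- have -> : (n1 + n2 + k * (e - 1) - c * (m1 + m2) =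
     (n1 - c * m1) + (n2 - c * m2) + k * (e - 1))%N by nia.
  by rewrite !dvdn_add // dvdn_mull.
- exact: key.
Qed.

Lemma inTt_mul n1 m1 n2 m2 k : inTt c d n1 m1 -> inTt c d n2 m2 ->
  inTt c d (n1 + n2 + k * (e - 1)) (m1 + m2).
Proof.
move=> /eqP h1 /eqP h2; apply/eqP.
rewrite mulnDr -[(c * m1 + c * m2)%N]addn0.
apply: congD; first exact: congD.
apply: dvd_mod0; exact: dvdn_mull.
Qed.

Lemma inT_inTt n m : inT e c d r mu n m -> inTt c d n m.
Proof. by move=> /and3P [a b _]; rewrite /inTt eqn_mod_dvd. Qed.

Lemma span1 (P : nat -> nat -> bool) : P 0%N 0%N -> spanMon (R := R) P 1.
Proof.
move=> h m n; rewrite coef1; case: (eqVneq m 0%N) => [->|ne] /=.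
  rewrite coef1; case: (eqVneq n 0%N) => [-> //|ne'] /=.
  by rewrite eqxx.
by rewrite coef0 eqxx.
Qed.

Lemma spanB (P : nat -> nat -> bool) f g : spanMon (R := R) P f -> spanMon P g ->
  spanMon P (f - g).
Proof.
move=> hf hg m n; rewrite !coefB => nz.
case: (eqVneq (f`_m)`_n 0) => [z|nz1]; last exact: hf.
by apply: hg; move: nz; rewrite z sub0r oppr_eq0.
Qed.

Lemma A_mul f g : A f -> A g -> A (om f g).
Proof.
move=> hf hg m N /(om_supp e2 hchar) [i [j [a [n [k [-> h1 h2 -> [hk hk2]]]]]]].
by apply: inT_mul => //; [exact: hf | exact: hg].
Qed.

Lemma At_mul f g : At f -> At g -> At (om f g).
Proof.
move=> hf hg m N /(om_supp e2 hchar) [i [j [a [n [k [-> h1 h2 -> [hk hk2]]]]]]].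
by apply: inTt_mul; [exact: hf | exact: hg].
Qed.

Lemma mono_coef (a : {poly R}) i0 m n : ((a%:P * 'X^i0 : {poly {poly R}})`_m)`_n != 0 ->
  m = i0 /\ a`_n != 0.
Proof.
rewrite coefCM coefXn; case: (eqVneq m i0) => [->|ne] /=.
  by rewrite mulr1.
by rewrite mulr0 coef0 eqxx.
Qed.

Lemma mono_coef_eq (a : {poly R}) i0 m : ((a%:P * 'X^i0 : {poly {poly R}})`_m) =
  if m == i0 then a else 0.
Proof.
rewrite coefCM coefXn; case: (eqVneq m i0) => _ /=; [exact: mulr1 | exact: mulr0].
Qed.

Lemma Xn_nz n : ('X^n : {poly R}) != 0.
Proof. by rewrite -size_poly_eq0 size_polyXn. Qed.

Lemma regX n : regularS ('X^n : {poly R}).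
Proof.
move=> q.
have h : q * 'X^n = 0 -> q = 0.
  move=> E; apply/eqP; apply: contraT => nz.
  have := size_mulXn n nz; rewrite E size_poly0 => h0.
  have hs : size q = 0%N by lia.
  by move: nz; rewrite -size_poly_eq0 hs.
by split => //; rewrite -commr_polyXn.
Qed.

Lemma bound1 (z : {poly {poly R}}) : exists B, forall m n, (z`_m)`_n != 0 ->
  (m < B)%N /\ (n < B)%N.
Proof.
exists (size z + \sum_(i < size z) size (z`_i)%R)%N => m n nz.
have hm : (m < size z)%N.
  by rewrite ltnNge; apply/negP => h; move: nz; rewrite (nth_default _ h) coef0 eqxx.
have hn : (n < size (z`_m)%R)%N.
  by rewrite ltnNge; apply/negP => h; move: nz; rewrite (nth_default _ h) eqxx.
split; first exact: ltn_addr.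
apply: (leq_trans hn); rewrite (bigD1 (Ordinal hm)) //=.
by rewrite addnCA leq_addr.
Qed.

Lemma boundL (E : seq {poly {poly R}}) : exists B, forall z, z \in E ->
  forall m n, (z`_m)`_n != 0 -> (m < B)%N /\ (n < B)%N.
Proof.
elim: E => [|z E [B IH]]; first by exists 0%N.
have [B1 h1] := bound1 z.
exists (maxn B B1) => z'; rewrite inE => /orP [/eqP ->|hz] m n nz.
  by have [? ?] := h1 _ _ nz; split; apply: (leq_trans _ (leq_maxr _ _)).
by have [? ?] := IH _ hz _ _ nz; split; apply: (leq_trans _ (leq_maxl _ _)).
Qed.

Section Mult.
Variable B : nat.
Let M := (mu + d * c * B + B + r * (e - 1))%N.
Let N := (c * M + d * c * B)%N.
Let cc : {poly {poly R}} := ('X^N)%:P * 'X^M.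

Lemma cc_coef m n : ((cc`_m)`_n != 0) -> m = M /\ n = N.
Proof.
move=> /mono_coef [-> nz]; split => //; move: nz; rewrite coefXn.
by case: (eqVneq n N) => // _; rewrite eqxx.
Qed.

Lemma NSb : (N + B + r * (e - 1) <= Sb M)%N.
Proof.
have h := Sb_big e c r mu e2 c1 mu1 hmu M ltac:(rewrite /M; lia).
have : (M - mu <= (M - mu) * r * (e - 1))%N.
  rewrite -mulnA; apply: leq_pmulr; nia.
rewrite /N /M in h *; nia.
Qed.

Lemma A_cc : A cc.
Proof.
move=> m n /cc_coef [-> ->]; apply/and3P; split.
- by rewrite /N leq_addr.
- by rewrite /N addKn dvdn_mulr // dvdn_mulr.
- by have := NSb; lia.
Qed.

Lemma A_ccz z : At z -> (forall m n, (z`_m)`_n != 0 -> (m < B)%N /\ (n < B)%N) ->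
  A (om cc z).
Proof.
move=> hz hb m' N' /(om_supp e2 hchar) [i [j [a [n [k [-> h1 h2 -> [hk hk2]]]]]]].
have [-> ->] := cc_coef h1.
have [hj hn] := hb _ _ h2.
have hzt := hz _ _ h2.
have hjB : (c * j <= d * c * B)%N.
  rewrite -mulnA; apply: leq_trans (leq_pmull _ d1); apply: leq_mul => //; exact: ltnW.
apply/and3P; split.
- rewrite mulnDr /N; lia.
- rewrite -eqn_mod_dvd; last by rewrite mulnDr /N; lia.
  apply/eqP; rewrite /N.
  have -> : (c * (M + j) = c * M + 0 + c * j + 0)%N by rewrite mulnDr !addn0.
  apply: congD; last by apply: dvd_mod0; apply: dvdn_mull.
  apply: congD; last by apply/eqP.
  apply: congD => //; apply: dvd_mod0; rewrite -mulnA; apply: dvdn_mulr; exact: dvdnn.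
- apply: (leq_trans _ (Sb_mono e c r mu e2 c1 mu1 hmu _ _ (leq_addr j M))).
  have := NSb; have : (k * (e - 1) <= r * (e - 1))%N by apply: leq_mul.
  lia.
Qed.

Lemma ccz_nz z : z != 0 -> om cc z != 0.
Proof.
move=> nz; set j := (size z).-1.
have hj : z`_j != 0 by rewrite -lead_coefE lead_coef_eq0.
apply/eqP => E.
have := om_left p e2 ('X^N) M z (M + j)%N; rewrite -/cc E coef0 leq_addr addKn.
move=> /esym/eqP; apply/negP.
rewrite -commr_polyXn -size_poly_eq0 size_mulXn ?addn_eq0 ?size_poly_eq0.
  by rewrite andbC (negbTE (iter_al_nz p e2 M hj)).
exact: (iter_al_nz p e2 M hj).
Qed.

Lemma cc_reg a : om a cc = 0 -> a = 0.
Proof.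
move=> E; apply/polyP => m; rewrite coef0.
have := om_right p e2 a ('X^N) M (m + M)%N; rewrite -/cc E coef0 leq_addl addnK.
move/esym => E2.
have hX : forall i, (i < N)%N -> ('X^N : {poly R})`_i = 0.
  by move=> i hi; rewrite coefXn; have -> : (i == N) = false by apply/eqP; lia.
have [l1 l2] := low_al p e2 m hX.
apply: (low_mul e2 l1 _ E2); by rewrite l2 coefXn eqxx.
Qed.

End Mult.

Lemma om_leftC (a : {poly R}) (g : {poly {poly R}}) k : (om a%:P g)`_k = a * g`_k.
Proof. by have := om_left p e2 a 0 g k; rewrite expr0 mulr1 subn0. Qed.

Lemma At_slice (f : {poly {poly R}}) m : At f -> At ((f`_m)%:P * 'X^m).
Proof. by move=> hf m' n /mono_coef [-> nz]; exact: hf. Qed.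

Lemma lam_At m : At (('X^(c * m))%:P * 'X^m).
Proof.
move=> m' n /mono_coef [-> nz]; move: nz; rewrite coefXn.
by case: (eqVneq n (c * m)%N) => [->|]; [rewrite /inTt eqxx | rewrite eqxx].
Qed.

Lemma size_mono_nz (u : {poly R}) m : u != 0 -> size (u%:P * 'X^m : {poly {poly R}}) = m.+1.
Proof.
move=> nz; rewrite size_mulXn ?polyC_eq0 // size_polyC nz addn1 //.
Qed.

Lemma Deg_all k : Deg_y At k.
Proof.
exists (('X^(c * k))%:P * 'X^k); split; first exact: lam_At.
rewrite -size_poly_eq0 size_mono_nz ?Xn_nz //.
Qed.

Lemma isdA : is_dA At 1.
Proof.
split => [k _ _|g hg]; first exact: dvd1n.
by apply: hg; [exact: Deg_all|].
Qed.

Lemma Rsub : Rsubring (@polyXd R d).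
Proof.
split.
- move=> a n; rewrite coefC; case: (eqVneq n 0%N) => [->|]; [by [] | by rewrite eqxx].
- move=> q q' h h'; exact: polyXdB.
- move=> q q' h h' n; rewrite coefM => /sum_nz [i nz].
  have n1 : q`_i != 0 by apply: contraNneq nz => ->; rewrite mul0r.
  have n2 : q'`_(n - i) != 0 by apply: contraNneq nz => ->; rewrite mulr0.
  have := ltn_ord i; rewrite ltnS => hi.
  by rewrite -(subnKC hi); apply: dvdn_add; [exact: h | exact: h'].
Qed.

Lemma Bm_At (q : {poly R}) : polyXd d q -> At q%:P.
Proof.
move=> hq m n; rewrite coefC; case: (eqVneq m 0%N) => [->|]; last by rewrite coef0 eqxx.
move=> /hq hdn; rewrite /inTt muln0 mod0n; apply/eqP; exact/eqP.
Qed.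

Lemma aut m : ring_aut_on (@polyXd R d) (iter m al).
Proof.
split; first by move=> q hq; exact: polyXd_al.
split; first exact: iter_al1.
split; first by move=> q q' _ _; exact: iter_alB.
split; first by move=> q q' _ _; exact: iter_alM.
split; first by move=> q q' _ _; exact: iter_al_inj.
move=> q hq; exact: (iter_al_surj e2 hchar m hd hq).
Qed.

Lemma lam_comm m (q : {poly R}) : (size (om (('X^(c * m))%:P * 'X^m) q%:P -
    om (iter m al q)%:P (('X^(c * m))%:P * 'X^m))%R <= m)%N.
Proof.
suff -> : om (('X^(c * m))%:P * 'X^m) q%:P =
    om (iter m al q)%:P (('X^(c * m))%:P * 'X^m) by rewrite subrr size_poly0.
apply/polyP => k; rewrite (om_left p e2) om_leftC mono_coef_eq coefC.
case: (eqVneq k m) => [->|ne].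
  by rewrite leqnn subnn /= commr_polyXn.
rewrite mulr0; case: leqP => // h.
have -> : (k - m == 0)%N = false by apply/eqP; lia.
by rewrite iter_al0 mulr0.
Qed.

Lemma lam_last m (q : {poly R}) : At (q%:P * 'X^m) -> exists u, polyXd d u /\ regularS u /\
  exists2 b, polyXd d b &
    om u%:P (q%:P * 'X^m) = om b%:P (('X^(c * m))%:P * 'X^m).
Proof.
move=> hq; exists ('X^(d * (c * m))); split.
  move=> n; rewrite coefXn; case: (eqVneq n (d * (c * m))%N) => [->|]; last by rewrite eqxx.
  by rewrite dvdn_mulr.
split; first exact: regX.
exists ('X^((d - 1) * (c * m)) * q).
  move=> n; rewrite coefXnM; case: ltnP => h; first by rewrite eqxx.
  move=> nz.
  have := hq m (n - (d - 1) * (c * m))%N; rewrite mono_coef_eq eqxx => /(_ nz) /eqP hm.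
  have -> : n = ((d - 1) * (c * m) + (n - (d - 1) * (c * m)))%N by rewrite subnKC.
  rewrite /dvdn; apply/eqP; rewrite -modnDm hm modnDm.
  have -> : ((d - 1) * (c * m) + c * m = d * (c * m))%N.
    by rewrite -[in RHS](subnK d1) mulnDl mul1n.
  by rewrite modnMr.
apply/polyP => k; rewrite !om_leftC !mono_coef_eq.
case: (eqVneq k m) => _; last by rewrite !mulr0.
rewrite -mulrA commr_polyXn mulrA -exprD.
by rewrite -[in X in 'X^X](subnK d1) mulnDl mul1n.
Qed.

Lemma special_At : special_with p e At
    (fun m => ('X^(c * m))%:P * 'X^m) (fun _ => @polyXd R d) (fun m => iter m al).
Proof.
split; first by move=> f m hf; exact: At_slice.
split.
  exists 1%N; split; first exact: isdA.
  by move=> k; split => _; [exact: dvd1n | exact: Deg_all].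
move=> m _ _.
split; first by exists ('X^(c * m)); split => //; exact: regX.
split; first exact: lam_At.
split; first by split; [exact: Rsub | exact: Bm_At].
split; first exact: aut.
split; first by move=> q _; exact: lam_comm.
exact: lam_last.
Qed.

End Main.
Unset Implicit Arguments.

Theorem mainTheorem20 (R : nzRingType) (p e r c d mu : nat) :
  prime p -> (2 <= e)%N -> (2 <= r)%N -> (1 <= c)%N -> (1 <= d)%N ->
  (d %| e - 1)%N ->
  (forall n : nat, (n%:R == 0 :> R) = (p ^ r.+1 %| n)%N) ->
  (1 <= mu)%N -> (c * Sigma e mu.-1 <= r)%N -> (r < c * Sigma e mu)%N ->
  let A  := spanMon (R := R) (fun n m => inT e c d r mu n m) in
  let At := spanMon (R := R) (fun n m => inTt c d n m) in
  [/\ ore_subring p e A,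
      ore_subring p e At,
      strongly_nicely_essential p e A At,
      special_with p e At
        (fun m => ('X^(c * m))%:P * 'X^m)
        (fun _ => polyXd d)
        (fun m => iter m (alphaX p e)) &
      special_subextension p e At].
Proof.
move=> _ e2 r2 c1 d1 hd hchar mu1 hmu _ A At.
have SA := special_At e2 r2 c1 d1 hd hchar mu1 hmu.
split.
- split.
  + apply: span1; by rewrite /inT muln0 subn0 dvdn0 /=.
  + by move=> f g hf hg; apply: spanB.
  + move=> f g hf hg m n; exact: (A_mul e2 r2 c1 d1 hd hchar mu1 hmu hf hg).
- split.
  + apply: span1; by rewrite /inTt muln0.
  + by move=> f g hf hg; apply: spanB.
  + move=> f g hf hg m n; exact: (At_mul e2 hd hchar hf hg).
- split.
  + split.
      move=> f hf m n nz; apply: inT_inTt; exact: hf.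
    move=> E hE; have [B hB] := boundL E.
    eexists; split.
      move=> m n; exact: (A_cc e2 r2 c1 d1 hd mu1 hmu (B := B)).
    move=> z hz; have [h1 h2] := hE z hz; split.
      exact: (ccz_nz p r c d mu e2 B h2).
    move=> m n; exact: (A_ccz e2 r2 c1 d1 hd hchar mu1 hmu h1 (hB z hz)).
  + move=> z hz; have [B hB] := bound1 z.
    eexists; split.
      move=> m n; exact: (A_cc e2 r2 c1 d1 hd mu1 hmu (B := B)).
    split.
      move=> a _; exact: (cc_reg e2 r2 c1 d1 hd mu1 hmu (B := B)).
    move=> m n; exact: (A_ccz e2 r2 c1 d1 hd hchar mu1 hmu hz hB).
- exact: SA.
- by exists (fun m => ('X^(c * m))%:P * 'X^m), (fun _ => polyXd d),
    (fun m => iter m (alphaX p e)).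
Qed.
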